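(* Assume the disturbance satisfies $\|\dot d(t)\|\le \xi_d$ for all $t\ge 0$. Let $C_1,C_2,\beta>0$, let $e_1=\hat F_1-\omega_e$, $e_2=\hat F_2-J^{-1}d$, and $\varepsilon=[\beta e_1^{T},e_2^{T}]^{T}\in\mathbb R^6$. Then there exist a symmetric positive definite matrix $Q_2\in\mathbb R^{6\times 6}$ and constants $C_d>0$, $h_m\ge 0$ such that $V_\varepsilon=\varepsilon^TQ_2\varepsilon$ satisfies $\dot V_\varepsilon\le -C_dV_\varepsilon+h_m$ along solutions. Consequently $\varepsilon$ converges exponentially into a compact set (it is uniformly ultimately bounded), and the disturbance estimation error $\tilde d=d-\hat d$ is bounded on $[0,\infty)$ and uniformly ultimately bounded, with ultimate bound of the form $\|\tilde d\|\le \lambda_{J\max}\sqrt{h_m/(\chi C_d\lambda_{Q\min})}$ for any $\chi\in(0,1)$, where $\lambda_{Q\min}$ is the smallest eigenvalue of $Q_2$.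
   Context: Attitude error dynamics: $\dot q_{ev}=F_e\omega_e$, $\dot q_{e0}=-\tfrac12 q_{ev}^T\omega_e$, $J\dot\omega_e=\Omega_e+u+d$, where $(q_{ev},q_{e0})\in\mathbb R^3\times\mathbb R$ is a unit quaternion, $\omega_e\in\mathbb R^3$, $F_e=\tfrac12(q_{e0}I_3+q_{ev}^\times)$ with $a^\times$ the skew-symmetric cross-product matrix of $a$, $J\in\mathbb R^{3\times3}$ is a known symmetric positive definite matrix with smallest/largest eigenvalues $\lambda_{J\min},\lambda_{J\max}$, $\Omega_e(t)\in\mathbb R^3$ is a known signal, $u(t)\in\mathbb R^3$ is the control input and $d(t)\in\mathbb R^3$ is an unknown bounded disturbance. Disturbance observer: with $F_d=J^{-1}\Omega_e$, the observer states $\hat F_1,\hat F_2\in\mathbb R^3$ evolve by $\dot{\hat F}_1=F_d+J^{-1}u+\hat F_2-C_1\beta e_1$, $\dot{\hat F}_2=-C_2\beta^2e_1$, where $e_1=\hat F_1-\omega_e$; the disturbance estimate is $\hat d=J\hat F_2$. *)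

(* Defs.v *)
From HB Require Import structures.
From mathcomp Require Import all_boot all_order all_algebra.
From mathcomp Require Import all_classical all_reals all_analysis.
Set Implicit Arguments. Unset Strict Implicit. Unset Printing Implicit Defensive.
Import Order.TTheory GRing.Theory Num.Theory.
Import numFieldNormedType.Exports.
Local Open Scope ring_scope.
Local Open Scope classical_set_scope.

Section Defs.
Variable R : realType.

Definition vnorm n (v : 'cV[R]_n) : R := Num.sqrt (\sum_i (v i 0) ^+ 2).

Definition skew (a : 'cV[R]_3) : 'M[R]_3 :=
  \matrix_(i < 3, j < 3)
    match nat_of_ord i, nat_of_ord j with
    | 0, 1 => - a (inord 2) 0 | 0, 2 => a (inord 1) 0
    | 1, 0 => a (inord 2) 0   | 1, 2 => - a (inord 0) 0
    | 2, 0 => - a (inord 1) 0 | 2, 1 => a (inord 0) 0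
    | _, _ => 0 end.

Definition Fe (q0 : R) (qv : 'cV[R]_3) : 'M[R]_3 :=
  2^-1 *: (q0%:M + skew qv).

Definition vderivable n (x : R -> 'cV[R]_n) (t : R) : Prop :=
  forall i, derivable (fun s => x s i 0) t 1.
Definition vderiv n (x : R -> 'cV[R]_n) (t : R) : 'cV[R]_n :=
  \col_i (fun s => x s i 0)^`() t.

Definition vcont0 n (x : R -> 'cV[R]_n) : Prop :=
  forall i, {within [set t : R | 0 <= t], continuous (fun s => x s i 0)}.

Definition sym n (A : 'M[R]_n) : Prop := A^T = A.
Definition posdef n (A : 'M[R]_n) : Prop :=
  forall v : 'cV[R]_n, v != 0 -> 0 < (v^T *m A *m v) 0 0.

Definition is_min_eig n (A : 'M[R]_n) (l : R) : Prop :=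
  eigenvalue A l /\ forall m, eigenvalue A m -> l <= m.
Definition is_max_eig n (A : 'M[R]_n) (l : R) : Prop :=
  eigenvalue A l /\ forall m, eigenvalue A m -> m <= l.

Definition qform n (Q : 'M[R]_n) (x : 'cV[R]_n) : R := (x^T *m Q *m x) 0 0.

End Defs.

(* Main.v *)
Require Import Defs.
From HB Require Import structures.
From mathcomp Require Import all_boot all_order all_algebra.
From mathcomp Require Import all_classical all_reals all_analysis.
From mathcomp Require Import ring lra.
Import Order.TTheory GRing.Theory Num.Theory.
Import numFieldNormedType.Exports.
Local Open Scope ring_scope.
Local Open Scope classical_set_scope.


Definition dotv {R : realType} {n} (x y : 'cV[R]_n) : R := (x^T *m y) 0 0.
Definition bil {R : realType} {n} (M : 'M[R]_n) (x y : 'cV[R]_n) : R := (x^T *m M *m y) 0 0.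

Lemma dotv_sum {R : realType} {n} (x y : 'cV[R]_n) : dotv x y = \sum_i (x i 0 * y i 0).
Proof. by rewrite /dotv mxE; apply: eq_bigr => i _; rewrite mxE. Qed.

Lemma dotv_ge0 {R : realType} {n} (x : 'cV[R]_n) : 0 <= dotv x x.
Proof. by rewrite dotv_sum; apply: sumr_ge0 => i _; rewrite -expr2 sqr_ge0. Qed.

Lemma vnorm_sq {R : realType} {n} (x : 'cV[R]_n) : vnorm x ^+ 2 = dotv x x.
Proof.
rewrite /vnorm sqr_sqrtr ?dotv_sum; first by apply: eq_bigr => i _; rewrite expr2.
by apply: sumr_ge0 => i _; rewrite sqr_ge0.
Qed.

Lemma vnorm_ge0 {R : realType} {n} (x : 'cV[R]_n) : 0 <= vnorm x.
Proof. exact: sqrtr_ge0. Qed.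

Lemma vnormE {R : realType} {n} (x : 'cV[R]_n) : vnorm x = Num.sqrt (dotv x x).
Proof. by rewrite -vnorm_sq sqrtr_sqr ger0_norm // vnorm_ge0. Qed.

Lemma coord_le {R : realType} {n} (x : 'cV[R]_n) i : x i 0 ^+ 2 <= dotv x x.
Proof.
rewrite dotv_sum (bigD1 i) //= -expr2 lerDl.
by apply: sumr_ge0 => j _; rewrite -expr2 sqr_ge0.
Qed.

Lemma dotvC {R : realType} {n} (x y : 'cV[R]_n) : dotv x y = dotv y x.
Proof. by rewrite !dotv_sum; apply: eq_bigr => i _; rewrite mulrC. Qed.

Lemma dotvDl {R : realType} {n} (x y z : 'cV[R]_n) : dotv (x + y) z = dotv x z + dotv y z.
Proof. by rewrite /dotv linearD /= mulmxDl mxE. Qed.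

Lemma dotvZl {R : realType} {n} k (x z : 'cV[R]_n) : dotv (k *: x) z = k * dotv x z.
Proof. by rewrite /dotv linearZ /= -scalemxAl mxE. Qed.

Lemma dotvNl {R : realType} {n} (x z : 'cV[R]_n) : dotv (- x) z = - dotv x z.
Proof. by rewrite -scaleN1r dotvZl mulN1r. Qed.

Lemma dotvBl {R : realType} {n} (x y z : 'cV[R]_n) : dotv (x - y) z = dotv x z - dotv y z.
Proof. by rewrite dotvDl dotvNl. Qed.

Lemma dotvDr {R : realType} {n} (x y z : 'cV[R]_n) : dotv z (x + y) = dotv z x + dotv z y.
Proof. by rewrite dotvC dotvDl !(dotvC z). Qed.
Lemma dotvZr {R : realType} {n} k (x z : 'cV[R]_n) : dotv z (k *: x) = k * dotv z x.
Proof. by rewrite dotvC dotvZl dotvC. Qed.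
Lemma dotvNr {R : realType} {n} (x z : 'cV[R]_n) : dotv z (- x) = - dotv z x.
Proof. by rewrite dotvC dotvNl dotvC. Qed.
Lemma dotvBr {R : realType} {n} (x y z : 'cV[R]_n) : dotv z (x - y) = dotv z x - dotv z y.
Proof. by rewrite dotvDr dotvNr. Qed.

Lemma dotv_col {R : realType} {m n} (x x' : 'cV[R]_m) (y y' : 'cV[R]_n) :
  dotv (col_mx x y) (col_mx x' y') = dotv x x' + dotv y y'.
Proof. by rewrite /dotv tr_col_mx mul_row_col mxE. Qed.

Lemma dotv_eq0 {R : realType} {n} (x : 'cV[R]_n) : dotv x x = 0 -> x = 0.
Proof.
move=> h; apply/matrixP => i j; rewrite (ord1 j) mxE.
have := coord_le x i; rewrite h => H.
by apply/eqP; rewrite -sqrf_eq0 eq_le H sqr_ge0.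
Qed.

Lemma bilE {R : realType} {n} (M : 'M[R]_n) x y : bil M x y = dotv x (M *m y).
Proof. by rewrite /bil /dotv mulmxA. Qed.

Lemma qformE {R : realType} {n} (M : 'M[R]_n) x : qform M x = bil M x x.
Proof. by []. Qed.

Lemma bil_sym {R : realType} {n} (M : 'M[R]_n) x y : sym M -> bil M x y = bil M y x.
Proof.
move=> sM; rewrite /bil.
have e : (x^T *m M *m y) 0 0 = ((x^T *m M *m y)^T) 0 0 by rewrite [in RHS]mxE.
rewrite e.
by rewrite !trmx_mul trmxK sM mulmxA.
Qed.

Lemma bilDl {R : realType} {n} (M : 'M[R]_n) x y z : bil M (x + y) z = bil M x z + bil M y z.
Proof. by rewrite !bilE dotvDl. Qed.
Lemma bilZl {R : realType} {n} (M : 'M[R]_n) k x z : bil M (k *: x) z = k * bil M x z.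
Proof. by rewrite !bilE dotvZl. Qed.
Lemma bilDr {R : realType} {n} (M : 'M[R]_n) x y z : bil M z (x + y) = bil M z x + bil M z y.
Proof. by rewrite !bilE mulmxDr dotvDr. Qed.
Lemma bilZr {R : realType} {n} (M : 'M[R]_n) k x z : bil M z (k *: x) = k * bil M z x.
Proof. by rewrite !bilE -scalemxAr dotvZr. Qed.

Lemma bil_CS {R : realType} {n} (M : 'M[R]_n) x y : sym M ->
  (forall v, 0 <= bil M v v) -> bil M x y ^+ 2 <= bil M x x * bil M y y.
Proof.
move=> sM psd.
set p := bil M x x; set q := bil M x y; set s := bil M y y.
have qs : bil M y x = q by rewrite bil_sym.
have ex : forall a b, bil M (a *: x + b *: y) (a *: x + b *: y) = a^+2 * p + 2 * a * b * q + b ^+2 * s.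
  move=> a b; rewrite !bilDl !bilDr !bilZl !bilZr qs -/p -/q -/s; ring.
have h1 := psd (s *: x + (- q) *: y); rewrite ex in h1.
have h2 := psd (q *: x + (- p) *: y); rewrite ex in h2.
have h3 := psd (1 *: x + (- q) *: y); rewrite ex in h3.
have p0 : 0 <= p by apply: psd.
have s0 : 0 <= s by apply: psd.
have [sp|] := ltrP 0 s.
  have : 0 <= p * s - q ^+ 2.
    by rewrite -(pmulr_rge0 _ sp); nra.
  by rewrite subr_ge0.
rewrite le_eqVlt ltNge s0 orbF => /eqP s00; rewrite s00 mulr0.
rewrite s00 in h1 h2 h3.
have [pp|] := ltrP 0 p.
  have : 0 <= - q ^+ 2 by rewrite -(pmulr_rge0 _ pp); nra.
  by rewrite oppr_ge0.
rewrite le_eqVlt ltNge p0 orbF => /eqP p00; rewrite p00 in h3; nra.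
Qed.


Lemma bil_sum {R : realType} {n} (M : 'M[R]_n) (x y : 'cV[R]_n) :
  bil M x y = \sum_i \sum_j (x i 0 * M i j * y j 0).
Proof.
rewrite bilE dotv_sum; apply: eq_bigr => i _; rewrite mxE mulr_sumr.
by apply: eq_bigr => j _; rewrite mulrA.
Qed.

Lemma bil_abs_le {R : realType} {n} (M : 'M[R]_n) (x y : 'cV[R]_n) :
  (forall i, `|x i 0| <= 1) -> (forall i, `|y i 0| <= 1) ->
  bil M x y <= \sum_i \sum_j `|M i j|.
Proof.
move=> hx hy; rewrite bil_sum; apply: le_trans (ler_norm _) _.
apply: le_trans (ler_norm_sum _ _ _) _; apply: ler_sum => i _.
apply: le_trans (ler_norm_sum _ _ _) _; apply: ler_sum => j _.
rewrite !normrM; have := hx i; have := hy j.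
move=> hy1 hx1.
have h1 : `|x i 0| * `|M i j| <= `|M i j| by rewrite ler_piMl.
apply: le_trans h1; rewrite ler_piMr //; apply: mulr_ge0.
Qed.

Lemma unit_coord {R : realType} {n} (x : 'cV[R]_n) i : dotv x x = 1 -> `|x i 0| <= 1.
Proof.
move=> h; have := coord_le x i; rewrite h => H.
rewrite -(ler_pXn2r (n:=2)) ?nnegrE ?normr_ge0 // expr1n real_normK //.
exact: num_real.
Qed.

Lemma bil0 {R : realType} {n} (M : 'M[R]_n) : bil M 0 0 = 0.
Proof. by rewrite /bil trmx0 !mul0mx mxE. Qed.

Lemma dotvZZ {R : realType} {n} k (x : 'cV[R]_n) : dotv (k *: x) (k *: x) = k ^+ 2 * dotv x x.
Proof. by rewrite dotvZl dotvZr mulrA expr2. Qed.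
Lemma bilZZ {R : realType} {n} (M : 'M[R]_n) k x : bil M (k *: x) (k *: x) = k ^+ 2 * bil M x x.
Proof. by rewrite bilZl bilZr mulrA expr2. Qed.

Lemma dotv_gt0 {R : realType} {n} (x : 'cV[R]_n) : x != 0 -> 0 < dotv x x.
Proof.
move=> nz; rewrite lt_def dotv_ge0 andbT; apply/eqP => /dotv_eq0 h.
by rewrite h eqxx in nz.
Qed.

Lemma normalize {R : realType} {n} (x : 'cV[R]_n) : x != 0 ->
  let s := Num.sqrt (dotv x x) in
  0 < s /\ dotv (s^-1 *: x) (s^-1 *: x) = 1.
Proof.
move=> nz s; have p := dotv_gt0 x nz.
have sp : 0 < s by rewrite sqrtr_gt0.
split=> //; rewrite dotvZZ exprVn sqr_sqrtr ?mulVf //; last exact: ltW.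
by rewrite gt_eqF.
Qed.

Lemma ker_of_nonunit {R : realType} {n} (A : 'M[R]_n) :
  A \notin unitmx -> exists2 v : 'rV_n, v *m A = 0 & v != 0.
Proof.
rewrite -row_free_unit -kermx_eq0 => /rowV0Pn [v vk nz].
by exists v => //; apply/eqP; rewrite -sub_kermx.
Qed.

Lemma bil_tr {R : realType} {n} (M : 'M[R]_n) (v : 'rV_n) : bil M v^T v^T = (v *m M *m v^T) 0 0.
Proof. by rewrite /bil trmxK. Qed.

Lemma tr_neq0 {R : realType} {n} (v : 'rV[R]_n) : v != 0 -> v^T != 0.
Proof. by apply: contra => /eqP h; rewrite -[v]trmxK h trmx0. Qed.

Lemma posdef_unit {R : realType} {n} (J : 'M[R]_n) : posdef J -> J \in unitmx.
Proof.
move=> pJ; apply/negPn/negP => /ker_of_nonunit [v vJ nz].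
have := pJ _ (tr_neq0 v nz); rewrite /qform trmxK vJ mul0mx mxE ltxx //.
Qed.

Lemma psd_of_posdef {R : realType} {n} (J : 'M[R]_n) : posdef J -> forall v, 0 <= bil J v v.
Proof.
move=> pJ v; have [->|nz] := eqVneq v 0; first by rewrite bil0.
exact/ltW/pJ.
Qed.

Lemma J_bound {R : realType} {n} (J : 'M[R]_n.+1) lJmax :
  sym J -> posdef J -> is_max_eig J lJmax ->
  forall x, vnorm (J *m x) <= lJmax * vnorm x.
Proof.
move=> sJ pJ [_ maxe].
pose S := [set r : R | exists x : 'cV[R]_n.+1, dotv x x = 1 /\ r = bil J x x].
pose KJ := \sum_i \sum_j `|J i j|.
pose e0 : 'cV[R]_n.+1 := const_mx 1.
have e0nz : e0 != 0.
  by apply/eqP => /matrixP /(_ 0 0); rewrite !mxE; apply/eqP; rewrite oner_neq0.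
have hS : has_sup S.
  split.
    have [_ h] := normalize _ e0nz.
    by eexists; exists ((Num.sqrt (dotv e0 e0))^-1 *: e0); split.
  exists KJ => r [x [x1 ->]]; apply: bil_abs_le => i; exact: unit_coord.
set mu := sup S.
have muB : forall v, bil J v v <= mu * dotv v v.
  move=> v; have [->|nz] := eqVneq v 0; first by rewrite bil0 /dotv trmx0 mul0mx mxE mulr0.
  have [sp h1] := normalize v nz; set s := Num.sqrt _ in sp h1.
  have : bil J (s^-1 *: v) (s^-1 *: v) <= mu.
    by apply: sup_upper_bound => //; exists (s^-1 *: v).
  rewrite bilZZ -[dotv v v](@sqr_sqrtr _ (dotv v v)) ?dotv_ge0 // -/s => H.
  have s2 : 0 < s ^+ 2 by rewrite exprn_gt0.
  have -> : bil J v v = s ^+ 2 * (s^-1 ^+ 2 * bil J v v).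
    by rewrite mulrA -exprMn mulfV ?expr1n ?mul1r // gt_eqF.
  by rewrite [mu * _]mulrC ler_pM2l.
have psdJ := psd_of_posdef J pJ.
have mu0 : 0 <= mu.
  have [sp h1] := normalize _ e0nz.
  by have := muB ((Num.sqrt (dotv e0 e0))^-1 *: e0); rewrite h1 mulr1; apply: le_trans.
have eigmu : eigenvalue J mu.
  pose N := mu%:M - J.
  have sN : sym N by rewrite /sym /N linearB /= tr_scalar_mx sJ.
  have bN : forall v, bil N v v = mu * dotv v v - bil J v v.
    move=> v; rewrite !bilE mulmxBl dotvBr mul_scalar_mx dotvZr.
    by [].
  have psdN : forall v, 0 <= bil N v v by move=> v; rewrite bN subr_ge0.
  have : N \notin unitmx.
    apply/negP => uN.
    pose Ni := invmx N.
    pose K := \sum_i \sum_j `|Ni i j|.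
    have K0 : 0 <= K by apply: sumr_ge0 => i _; apply: sumr_ge0 => j _.
    have key : forall x, dotv x x = 1 -> 1 <= bil N x x * (K + 1).
      move=> x x1; set y := Ni *m x.
      have Ny : N *m y = x by rewrite /y mulKVmx.
      have e1 : bil N x y = 1 by rewrite bilE Ny.
      have e2 : bil N y y = bil Ni x x.
        rewrite bilE Ny dotvC /y -bilE; done.
      have cs := bil_CS N x y sN psdN.
      rewrite e1 e2 expr1n in cs.
      have : bil Ni x x <= K by apply: bil_abs_le => i; exact: unit_coord.
      have := psdN x; nra.
    have epsp : 0 < (2 * (K + 1))^-1 by rewrite invr_gt0; nra.
    have [r [x [x1 ->]] lt] := sup_adherent epsp hS.
    have := key x x1; rewrite bN x1 mulr1 -/mu.
    move: lt; rewrite -/mu => lt.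
    have : (mu - bil J x x) * (K + 1) < (2 * (K + 1))^-1 * (K + 1).
      by rewrite ltr_pM2r; [lra| lra].
    rewrite invfM -mulrA mulVf; last by apply/eqP; lra.
    lra.
  move=> nu; rewrite /eigenvalue /eigenspace.
  have -> : J - mu%:M = - N by rewrite /N opprB.
  apply/negP; rewrite kermx_eq0 row_free_unit => uN'.
  move: nu; rewrite -[N]opprK -scaleN1r unitmxZ ?uN' //.
  by rewrite unitrN unitr1.
have mule := maxe _ eigmu.
move=> x.
have lJ0 : 0 <= lJmax by apply: le_trans mule.
set a := dotv (J *m x) (J *m x).
have ea : a = bil J x (J *m x) by rewrite /a /bil /dotv trmx_mul sJ mulmxA.
have cs := bil_CS J x (J *m x) sJ psdJ; rewrite -ea in cs.
have h1 := muB x; have h2 := muB (J *m x); rewrite -/a in h2.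
have a0 : 0 <= a by apply: dotv_ge0.
have X0 := dotv_ge0 x.
have ha : a <= mu ^+ 2 * dotv x x.
  have [->|ap] := eqVneq a 0; first by apply: mulr_ge0 => //; apply: sqr_ge0.
  have ap' : 0 < a by rewrite lt_def ap a0.
  have : a * a <= a * (mu ^+ 2 * dotv x x).
    rewrite -expr2; apply: le_trans cs _.
    apply: le_trans (ler_pM (psdJ x) (psdJ _) h1 h2) _.
    have E : mu * dotv x x * (mu * a) = a * (mu ^+ 2 * dotv x x) by ring.
    by rewrite E.
  by rewrite ler_pM2l.
  rewrite !vnormE -/a.
  apply: le_trans (ler_wsqrtr ha) _.
  rewrite sqrtrM ?sqr_ge0 // sqrtr_sqr ger0_norm //.
  apply: ler_wpM2r => //; apply: sqrtr_ge0.
Qed.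


Definition Qblk {R : realType} (a b c : R) : 'M[R]_(3 + 3) :=
  block_mx (a%:M) (- b%:M) (- b%:M) (c%:M).

Lemma dotv_sc {R : realType} {m} (x y : 'cV[R]_m) k : ((x^T *m k%:M) *m y) 0 0 = k * dotv x y.
Proof. by rewrite mul_mx_scalar -scalemxAl mxE. Qed.

Lemma bil_blk {R : realType} (a b c : R) (x y x' y' : 'cV[R]_3) :
  bil (Qblk a b c) (col_mx x y) (col_mx x' y') =
  a * dotv x x' - b * dotv x y' - b * dotv y x' + c * dotv y y'.
Proof.
rewrite /bil /Qblk tr_col_mx mul_row_block mul_row_col !mulmxN !mul_mx_scalar.
rewrite !mulmxDl !mulNmx -!scalemxAl.
rewrite /dotv; set p1 := x^T *m x'; set p2 := y^T *m x'; set p3 := x^T *m y'; set p4 := y^T *m y'.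
rewrite !mxE; ring.
Qed.

Lemma sym_blk {R : realType} (a b c : R) : sym (Qblk a b c).
Proof.
by rewrite /sym /Qblk tr_block_mx !linearN /= !tr_scalar_mx.
Qed.

Lemma colsplit {R : realType} (v : 'cV[R]_(3 + 3)) :
  exists x y, v = col_mx x y.
Proof. by exists (usubmx v), (dsubmx v); rewrite vsubmxK. Qed.

Lemma lam_facts {R : realType} (a b c : R) : 0 < a -> 0 < b -> 0 < c -> b ^+ 2 < a * c ->
  let lam := ((a + c) - Num.sqrt ((a - c) ^+ 2 + 4 * b ^+ 2)) / 2 in
  [/\ 0 < lam, lam < a & (a - lam) * (c - lam) = b ^+ 2].
Proof.
move=> a0 b0 c0 abc lam.
have D0 : 0 <= (a - c) ^+ 2 + 4 * b ^+ 2 by rewrite addr_ge0 ?sqr_ge0 // mulr_ge0 // sqr_ge0.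
rewrite /lam; set s := Num.sqrt ((a - c) ^+ 2 + 4 * b ^+ 2).
have s0 : 0 <= s by apply: sqrtr_ge0.
have ss : s * s = (a - c) ^+ 2 + 4 * b ^+ 2 by rewrite -expr2 sqr_sqrtr.
have sa : c - a < s.
  have [h|h] := ltrP (c - a) 0; first by lra.
  have : (c - a) * (c - a) < s * s by rewrite ss; nra.
  nra.
have sa2 : s < a + c.
  have : s * s < (a + c) * (a + c) by rewrite ss; nra.
  nra.
split; try lra.
Qed.

Lemma blk_lower {R : realType} (a b c lam : R) (v : 'cV[R]_(3+3)) :
  0 < lam -> lam < a -> (a - lam) * (c - lam) = b ^+ 2 ->
  lam * dotv v v <= bil (Qblk a b c) v v.
Proof.
move=> l0 la E; have [x [y ->]] := colsplit v.
rewrite bil_blk dotv_col (dotvC y x).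
have h := dotv_ge0 ((a - lam) *: x - b *: y).
rewrite !dotvBl !dotvBr !dotvZl !dotvZr (dotvC y x) in h.
set X := dotv x x in h *; set Y := dotv y y in h *; set P := dotv x y in h *.
have al : 0 < a - lam by lra.
have E' : (a - lam) * (c - lam) * Y = b ^+ 2 * Y by rewrite E.
have : 0 <= (a - lam) * ((a - lam) * X - 2 * b * P + (c - lam) * Y) by lra.
rewrite pmulr_rge0 //; lra.
Qed.

Lemma blk_eig {R : realType} (a b c lam : R) :
  0 < b -> 0 < lam -> lam < a -> (a - lam) * (c - lam) = b ^+ 2 ->
  is_min_eig (Qblk a b c) lam /\ posdef (Qblk a b c).
Proof.
move=> b0 l0 la E.
have dl : forall v, lam * dotv v v <= bil (Qblk a b c) v v by move=> v; apply: blk_lower.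
split; last first.
  move=> v nz; apply: lt_le_trans (dl v); apply: mulr_gt0 => //; exact: dotv_gt0.
split.
  apply/eigenvalueP.
  pose e : 'rV[R]_3 := const_mx 1.
  have enz : e != 0.
    by apply/eqP => /matrixP /(_ 0 0); rewrite !mxE; apply/eqP; rewrite oner_neq0.
  exists (row_mx (b *: e) ((a - lam) *: e)).
    rewrite /Qblk mul_row_block !mulmxN !mul_mx_scalar !scalerA scale_row_mx !scalerA.
    rewrite -!scaleNr -!scalerDl; congr row_mx; congr (_ *: _).
    - change (a * b + (- b) * (a - lam) = lam * b); ring.
    - change ((- b) * b + c * (a - lam) = lam * (a - lam)); lra.
  apply/eqP => /eqP; rewrite -row_mx0 => /eqP/eq_row_mx [h _].
  move/eqP: h; rewrite scaler_eq0 (negbTE enz) orbF => /eqP h.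
  by move: b0; rewrite h ltxx.
move=> m /eigenvalueP [v vQ nz].
have h := dl v^T; rewrite bil_tr vQ -scalemxAl mxE in h.
have dp : 0 < dotv v^T v^T by apply: dotv_gt0; apply: tr_neq0.
have : lam * dotv v^T v^T <= m * dotv v^T v^T by move: h; rewrite /dotv trmxK.
by rewrite ler_pM2r.
Qed.


Definition SD {R : realType} (f : R -> R) t f' := derivable f t 1 /\ f^`() t = f'.
Definition VD {R : realType} {n} (x : R -> 'cV[R]_n) t x' := vderivable x t /\ vderiv x t = x'.

Lemma SD_add {R : realType} (f g : R -> R) t f' g' : SD f t f' -> SD g t g' ->
  SD (fun s => f s + g s) t (f' + g').
Proof.
move=> [df <-] [dg <-]; split; first exact: (derivableD df dg).
by rewrite !derive1E (deriveD df dg).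
Qed.

Lemma SD_opp {R : realType} (f : R -> R) t f' : SD f t f' -> SD (fun s => - f s) t (- f').
Proof.
move=> [df <-]; split; first exact: (derivableN df).
by rewrite !derive1E (deriveN df).
Qed.

Lemma SD_mul {R : realType} (f g : R -> R) t f' g' : SD f t f' -> SD g t g' ->
  SD (fun s => f s * g s) t (f' * g t + f t * g').
Proof.
move=> [df <-] [dg <-]; split; first exact: (derivableM df dg).
rewrite derive1E (deriveM df dg) -!derive1E addrC; congr (_ + _); exact: mulrC.
Qed.

Lemma SD_cst {R : realType} (k : R) t : SD (fun _ => k) t 0.
Proof. split; first exact: derivable_cst. by rewrite derive1E derive_cst. Qed.

Lemma SD_scale {R : realType} (f : R -> R) t f' k : SD f t f' -> SD (fun s => k * f s) t (k * f').
Proof.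
move=> h; have := @SD_mul _ _ _ _ _ _ (SD_cst k t) h; by rewrite mul0r add0r.
Qed.

Lemma SD_ext {R : realType} (f g : R -> R) t f' : (forall s, f s = g s) -> SD f t f' -> SD g t f'.
Proof. by move=> e; have -> : f = g by apply: funext. Qed.

Lemma SD_sum {R : realType} {n} (f : 'I_n -> R -> R) t f' :
  (forall i, SD (f i) t (f' i)) -> SD (fun s => \sum_i f i s) t (\sum_i f' i).
Proof.
elim: n f f' => [|n IH] f f' h.
  apply: (@SD_ext _ (fun _ => 0)); first by move=> s; rewrite big_ord0.
  rewrite big_ord0; split; first exact: derivable_cst.
  by rewrite derive1E derive_cst.
apply: (@SD_ext _ (fun s => f ord0 s + \sum_(i < n) f (lift ord0 i) s)).
  by move=> s; rewrite big_ord_recl.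
rewrite big_ord_recl; apply: SD_add => //; apply: (IH (fun i => f (lift ord0 i))) => i.
exact: h.
Qed.

Lemma VD_comp {R : realType} {n} (x : R -> 'cV[R]_n) t x' :
  VD x t x' <-> forall i, SD (fun s => x s i 0) t (x' i 0).
Proof.
split.
  by move=> [dx <-] i; split; [exact: dx | rewrite mxE].
move=> h; split; first by move=> i; case: (h i).
apply/matrixP => i j; rewrite (ord1 j) mxE; by case: (h i).
Qed.

Lemma VD_add {R : realType} {n} (x y : R -> 'cV[R]_n) t x' y' : VD x t x' -> VD y t y' ->
  VD (fun s => x s + y s) t (x' + y').
Proof.
move=> /VD_comp hx /VD_comp hy; apply/VD_comp => i.
rewrite mxE; apply: (@SD_ext _ (fun s => x s i 0 + y s i 0)); first by move=> s; rewrite mxE.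
exact: SD_add.
Qed.

Lemma VD_scale {R : realType} {n} (x : R -> 'cV[R]_n) t x' k : VD x t x' ->
  VD (fun s => k *: x s) t (k *: x').
Proof.
move=> /VD_comp hx; apply/VD_comp => i.
rewrite mxE; apply: (@SD_ext _ (fun s => k * x s i 0)); first by move=> s; rewrite mxE.
exact: SD_scale.
Qed.

Lemma VD_sub {R : realType} {n} (x y : R -> 'cV[R]_n) t x' y' : VD x t x' -> VD y t y' ->
  VD (fun s => x s - y s) t (x' - y').
Proof.
move=> hx hy; have hy' := @VD_scale _ _ _ _ _ (-1) hy.
have := @VD_add _ _ _ _ _ _ _ hx hy'; rewrite scaleN1r.
by have -> : (fun s => x s + (-1) *: y s) = (fun s => x s - y s) by apply: funext => s; rewrite scaleN1r.
Qed.

Lemma VD_mul {R : realType} {n m} (A : 'M[R]_(m, n)) (x : R -> 'cV[R]_n) t x' : VD x t x' ->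
  VD (fun s => A *m x s) t (A *m x').
Proof.
move=> /VD_comp hx; apply/VD_comp => i.
rewrite mxE; apply: (@SD_ext _ (fun s => \sum_j A i j * x s j 0)); first by move=> s; rewrite mxE.
by apply: SD_sum => j; apply: SD_scale.
Qed.

Lemma VD_col {R : realType} {n m} (x : R -> 'cV[R]_n) (y : R -> 'cV[R]_m) t x' y' :
  VD x t x' -> VD y t y' -> VD (fun s => col_mx (x s) (y s)) t (col_mx x' y').
Proof.
move=> /VD_comp hx /VD_comp hy; apply/VD_comp => i.
have -> : i = fintype.unsplit (fintype.split i) by rewrite fintype.splitK.
case: (fintype.split i) => k /=.
  rewrite col_mxEu; apply: (@SD_ext _ (fun s => x s k 0)); first by move=> s; rewrite col_mxEu.
  exact: hx.
rewrite col_mxEd; apply: (@SD_ext _ (fun s => y s k 0)); first by move=> s; rewrite col_mxEd.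
exact: hy.
Qed.

Lemma SD_dot {R : realType} {n} (x y : R -> 'cV[R]_n) t x' y' : VD x t x' -> VD y t y' ->
  SD (fun s => dotv (x s) (y s)) t (dotv x' (y t) + dotv (x t) y').
Proof.
move=> /VD_comp hx /VD_comp hy.
apply: (@SD_ext _ (fun s => \sum_i (x s i 0 * y s i 0))); first by move=> s; rewrite dotv_sum.
rewrite !dotv_sum -big_split /=; apply: SD_sum => i.
exact: SD_mul.
Qed.


Lemma lyap_core {R : realType} (b c m U S V T p11 p22 q1 q2 ww W : R) :
  0 < m -> 0 < U -> 0 <= ww ->
  T <= -2 * m * S + 2 * b * q1 - 2 * c * q2 ->
  S = p11 + p22 ->
  0 <= m ^+ 2 * p11 - 2 * m * b * q1 + b ^+ 2 * ww ->
  0 <= m ^+ 2 * p22 + 2 * m * c * q2 + c ^+ 2 * ww ->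
  V <= U * S -> ww <= W ->
  T <= - (m / U) * V + ((b ^+ 2 + c ^+ 2) * W / m + 1).
Proof.
move=> m0 U0 w0 hT hS y1 y2 hV hW.
have mi : 0 < m^-1 by rewrite invr_gt0.
have y1' : 2 * b * q1 <= m * p11 + b ^+ 2 * ww / m.
  have : 0 <= m^-1 * (m ^+ 2 * p11 - 2 * m * b * q1 + b ^+ 2 * ww) by apply: mulr_ge0 => //; exact: ltW.
  have -> : m^-1 * (m ^+ 2 * p11 - 2 * m * b * q1 + b ^+ 2 * ww) =
     m * p11 + b ^+ 2 * ww / m - 2 * b * q1 by field; rewrite gt_eqF.
  by rewrite subr_ge0.
have y2' : - (2 * c * q2) <= m * p22 + c ^+ 2 * ww / m.
  have : 0 <= m^-1 * (m ^+ 2 * p22 + 2 * m * c * q2 + c ^+ 2 * ww) by apply: mulr_ge0 => //; exact: ltW.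
  have -> : m^-1 * (m ^+ 2 * p22 + 2 * m * c * q2 + c ^+ 2 * ww) =
     m * p22 + c ^+ 2 * ww / m + 2 * c * q2 by field; rewrite gt_eqF.
  move=> h; lra.
have hV' : m / U * V <= m * S.
  have : m / U * V <= m / U * (U * S) by rewrite ler_pM2l ?divr_gt0.
  by have -> : m / U * (U * S) = m * S by field; rewrite gt_eqF.
have hW' : (b ^+ 2 + c ^+ 2) * ww / m <= (b ^+ 2 + c ^+ 2) * W / m.
  rewrite ler_pM2r // ler_wpM2l //; apply: addr_ge0; exact: sqr_ge0.
have E1 : b ^+ 2 * ww / m + c ^+ 2 * ww / m = (b ^+ 2 + c ^+ 2) * ww / m by ring.
have E2 : m * p11 + m * p22 = m * S by rewrite hS; ring.
have E3 : 2 * m * S = m * S + m * S by ring.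
rewrite mulNr.
lra.
Qed.


Lemma SD_id {R : realType} (t : R) : SD (fun s => s) t 1.
Proof. split; first exact: derivable_id. by rewrite derive1E derive_id. Qed.

Lemma SD_exp {R : realType} (k t : R) : SD (fun s => expR (k * s)) t (k * expR (k * t)).
Proof.
have hf : SD (fun s => k * s) t (k * 1) by apply: SD_scale; exact: SD_id.
rewrite mulr1 in hf; case: hf => df df'.
have dg : forall x : R, derivable (@expR R) x 1 by move=> x; exact: derivable_expR.
have -> : (fun s => expR (k * s)) = (@expR R) \o (fun s => k * s) by [].
split.
  apply/derivable1_diffP; apply: differentiable_comp; apply/derivable1_diffP => //.
rewrite derive1_comp // df' mulrC; congr (_ * _).
by rewrite derive1E derive_val.
Qed.

Lemma comparison {R : realType} (V : R -> R) (Cd hm : R) : 0 < Cd -> 0 <= hm ->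
  (forall t, 0 < t -> derivable V t 1 /\ V^`() t <= - Cd * V t + hm) ->
  {within [set t : R | 0 <= t], continuous V} ->
  forall t, 0 <= t -> V t <= expR (- Cd * t) * V 0 + hm / Cd.
Proof.
move=> Cd0 hm0 hV cV t t0.
pose W := fun s => expR (Cd * s) * (V s - hm / Cd).
have SDW : forall x, 0 < x -> SD W x (Cd * expR (Cd * x) * (V x - hm / Cd) + expR (Cd * x) * ((V^`())%classic x + 0)).
  move=> x x0; apply: SD_mul; first exact: SD_exp.
  apply: SD_add; last exact: SD_cst.
  by split => //; case: (hV x x0).
have key : W t <= W 0.
  apply: (@ler0_derive1_nincry _ W 0) => //.
  - by move=> x; rewrite in_itv /= andbT => x0; case: (SDW x x0).
  - move=> x; rewrite in_itv /= andbT => x0; case: (SDW x x0) => _ ->.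
    have E : Cd * expR (Cd * x) * (V x - hm / Cd) + expR (Cd * x) * ((V^`())%classic x + 0)
      = expR (Cd * x) * ((V^`())%classic x + Cd * V x - hm) by field; rewrite gt_eqF.
    rewrite E; apply: mulr_ge0_le0; first exact: ltW (expR_gt0 _).
    have := (hV x x0).2; lra.
  - have -> : `[0, +oo[%classic = [set t : R | 0 <= t].
      by apply/seteqP; split => x /=; rewrite in_itv /= andbT.
    have ce : continuous (fun s : R => expR (Cd * s)).
      move=> x; apply: continuous_comp; last exact: continuous_expR.
      by apply: cvgMr; exact: cvg_id.
    move=> x; apply: cvgM.
      by apply: (continuous_subspaceT ce).
    apply: cvgB; first exact: cV.
    exact: cvg_cst.
rewrite /W mulr0 expR0 mul1r in key.
rewrite mulNr expRN.
have e := expR_gt0 (Cd * t); set E := expR (Cd * t) in e key *.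
have ei : 0 < E^-1 by rewrite invr_gt0.
have hc : 0 <= hm / Cd by rewrite divr_ge0 // ltW.
have h1 : V t - hm / Cd <= E^-1 * (V 0 - hm / Cd).
  have -> : V t - hm / Cd = E^-1 * (E * (V t - hm / Cd)) by rewrite mulrA mulVf ?mul1r // gt_eqF.
  by rewrite ler_pM2l.
have h2 : 0 <= E^-1 * (hm / Cd) by rewrite mulr_ge0 // ltW.
have E3 : E^-1 * (V 0 - hm / Cd) = E^-1 * V 0 - E^-1 * (hm / Cd) by ring.
lra.
Qed.


Lemma coord_le_norm {R : realType} {n} (x : 'cV[R]_n) j : `|x j 0| <= vnorm x.
Proof.
have := coord_le x j; rewrite -vnorm_sq => h.
rewrite -(ler_pXn2r (n:=2)) ?nnegrE ?normr_ge0 ?vnorm_ge0 // real_normK //.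
exact: num_real.
Qed.

Lemma crude {R : realType} {n m} (A : 'M[R]_(m, n)) (x : 'cV[R]_n) :
  dotv (A *m x) (A *m x) <= (\sum_i (\sum_j `|A i j|) ^+ 2) * dotv x x.
Proof.
rewrite [dotv (A *m x) _]dotv_sum mulr_suml; apply: ler_sum => i _.
set ci := \sum_j `|A i j|.
have ci0 : 0 <= ci by apply: sumr_ge0.
have h : `|(A *m x) i 0| <= ci * vnorm x.
  rewrite mxE /ci mulr_suml; apply: le_trans (ler_norm_sum _ _ _) _.
  apply: ler_sum => j _; rewrite normrM ler_wpM2l //; exact: coord_le_norm.
have h2 : (A *m x) i 0 * (A *m x) i 0 <= (ci * vnorm x) ^+ 2.
  rewrite -expr2 -real_normK ?num_real //.
  by rewrite ler_pXn2r ?nnegrE ?normr_ge0 ?mulr_ge0 ?vnorm_ge0.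
by apply: le_trans h2 _; rewrite exprMn vnorm_sq.
Qed.


Definition SC {R : realType} (f : R -> R) := {within [set t : R | 0 <= t], continuous f}.

Lemma SC_add {R : realType} (f g : R -> R) : SC f -> SC g -> SC (fun s => f s + g s).
Proof. by move=> hf hg x; apply: cvgD; [exact: hf | exact: hg]. Qed.

Lemma SC_mul {R : realType} (f g : R -> R) : SC f -> SC g -> SC (fun s => f s * g s).
Proof. by move=> hf hg x; apply: cvgM; [exact: hf | exact: hg]. Qed.

Lemma SC_cst {R : realType} (k : R) : SC (fun _ => k).
Proof. by move=> x; exact: cvg_cst. Qed.

Lemma SC_ext {R : realType} (f g : R -> R) : (forall s, f s = g s) -> SC f -> SC g.
Proof. by move=> e; have -> : f = g by apply: funext. Qed.

Lemma SC_sum {R : realType} {n} (f : 'I_n -> R -> R) :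
  (forall i, SC (f i)) -> SC (fun s => \sum_i f i s).
Proof.
elim: n f => [|n IH] f h.
  by apply: (@SC_ext _ (fun _ => 0)); [move=> s; rewrite big_ord0 | exact: SC_cst].
apply: (@SC_ext _ (fun s => f ord0 s + \sum_(i < n) f (lift ord0 i) s)).
  by move=> s; rewrite big_ord_recl.
apply: SC_add => //; apply: (IH (fun i => f (lift ord0 i))) => i; exact: h.
Qed.

Lemma VC_comp {R : realType} {n} (x : R -> 'cV[R]_n) :
  vcont0 x <-> forall i, SC (fun s => x s i 0).
Proof. by []. Qed.

Lemma VC_add {R : realType} {n} (x y : R -> 'cV[R]_n) : vcont0 x -> vcont0 y ->
  vcont0 (fun s => x s + y s).
Proof.
move=> hx hy i; apply: (@SC_ext _ (fun s => x s i 0 + y s i 0)); first by move=> s; rewrite mxE.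
exact: SC_add.
Qed.

Lemma VC_scale {R : realType} {n} (x : R -> 'cV[R]_n) k : vcont0 x -> vcont0 (fun s => k *: x s).
Proof.
move=> hx i; apply: (@SC_ext _ (fun s => k * x s i 0)); first by move=> s; rewrite mxE.
exact: SC_mul (SC_cst k) (hx i).
Qed.

Lemma VC_sub {R : realType} {n} (x y : R -> 'cV[R]_n) : vcont0 x -> vcont0 y ->
  vcont0 (fun s => x s - y s).
Proof.
move=> hx hy; have := @VC_add _ _ _ _ hx (@VC_scale _ _ _ (-1) hy).
by have -> : (fun s => x s + (-1) *: y s) = (fun s => x s - y s) by apply: funext => s; rewrite scaleN1r.
Qed.

Lemma VC_mul {R : realType} {n m} (A : 'M[R]_(m, n)) (x : R -> 'cV[R]_n) : vcont0 x ->
  vcont0 (fun s => A *m x s).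
Proof.
move=> hx i; apply: (@SC_ext _ (fun s => \sum_j A i j * x s j 0)); first by move=> s; rewrite mxE.
by apply: SC_sum => j; apply: SC_mul (SC_cst _) (hx j).
Qed.

Lemma VC_col {R : realType} {n m} (x : R -> 'cV[R]_n) (y : R -> 'cV[R]_m) :
  vcont0 x -> vcont0 y -> vcont0 (fun s => col_mx (x s) (y s)).
Proof.
move=> hx hy i.
have -> : i = fintype.unsplit (fintype.split i) by rewrite fintype.splitK.
case: (fintype.split i) => k /=.
  by apply: (@SC_ext _ (fun s => x s k 0)); [move=> s; rewrite col_mxEu | exact: hx].
by apply: (@SC_ext _ (fun s => y s k 0)); [move=> s; rewrite col_mxEd | exact: hy].
Qed.

Lemma SC_dot {R : realType} {n} (x y : R -> 'cV[R]_n) : vcont0 x -> vcont0 y ->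
  SC (fun s => dotv (x s) (y s)).
Proof.
move=> hx hy; apply: (@SC_ext _ (fun s => \sum_i (x s i 0 * y s i 0))).
  by move=> s; rewrite dotv_sum.
apply: SC_sum => i; exact: SC_mul (hx i) (hy i).
Qed.


Lemma J_bound2 {R : realType} (J : 'M[R]_3) lJmax :
  sym J -> posdef J -> is_max_eig J lJmax ->
  0 <= lJmax /\ forall x, vnorm (J *m x) <= lJmax * vnorm x.
Proof.
move=> sJ pJ mJ; have Jb := @J_bound _ _ J lJmax sJ pJ mJ; split => //.
pose e0 : 'cV[R]_3 := const_mx 1.
have e0nz : e0 != 0.
  by apply/eqP => /matrixP /(_ 0 0); rewrite !mxE; apply/eqP; rewrite oner_neq0.
have np : 0 < vnorm e0 by rewrite vnormE sqrtr_gt0 dotv_gt0.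
have := le_trans (vnorm_ge0 _) (Jb e0).
by rewrite pmulr_lge0.
Qed.

Lemma dotv_sum2 {R : realType} {n} (x y : 'cV[R]_n) :
  dotv (x + y) (x + y) = dotv x x + 2 * dotv x y + dotv y y.
Proof. rewrite dotvDl !dotvDr (dotvC y x); ring. Qed.

Lemma grp_id (V : zmodType) (A B F X D : V) : A + B + F - X - (A + B + D) = F - D - X.
Proof. by rewrite opprD addrAC addrA (addrC (A + B)) addrK addrAC. Qed.

Lemma dotv_diff2 {R : realType} {n} (x y : 'cV[R]_n) :
  dotv (x - y) (x - y) = dotv x x - 2 * dotv x y + dotv y y.
Proof. rewrite dotvBl !dotvBr (dotvC y x); ring. Qed.

Lemma vnormN {R : realType} {n} (x : 'cV[R]_n) : vnorm (- x) = vnorm x.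
Proof. by rewrite !vnormE dotvNl dotvNr opprK. Qed.

Lemma vnorm_col_r {R : realType} {n m} (x : 'cV[R]_n) (y : 'cV[R]_m) : vnorm y <= vnorm (col_mx x y).
Proof.
rewrite !vnormE dotv_col; apply: ler_wsqrtr; rewrite lerDr; exact: dotv_ge0.
Qed.

Theorem mainTheorem2 (R : realType) (J : 'M[R]_3) (lJmax : R)
  (C1 C2 beta xi_d : R) :
  sym J -> posdef J -> is_max_eig J lJmax ->
  0 < C1 -> 0 < C2 -> 0 < beta ->
  exists (Q2 : 'M[R]_6) (Cd hm lQmin : R),
    [/\ sym Q2, posdef Q2, 0 < Cd, 0 <= hm & is_min_eig Q2 lQmin] /\
    forall (qv : R -> 'cV[R]_3) (q0 : R -> R) (we Om u d F1 F2 : R -> 'cV[R]_3),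
      (* unit quaternion *)
      (forall t, 0 <= t -> vnorm (qv t) ^+ 2 + q0 t ^+ 2 = 1) ->
      (* continuity of the states and of d on [0, +oo) *)
      vcont0 qv -> {within [set t : R | 0 <= t], continuous q0} ->
      vcont0 we -> vcont0 F1 -> vcont0 F2 -> vcont0 d ->
      (* attitude error dynamics *)
      (forall t, 0 < t -> vderivable qv t /\
         vderiv qv t = Fe (q0 t) (qv t) *m we t) ->
      (forall t, 0 < t -> derivable q0 t 1 /\
         q0^`() t = - 2^-1 * ((qv t)^T *m we t) 0 0) ->
      (forall t, 0 < t -> vderivable we t /\
         J *m vderiv we t = Om t + u t + d t) ->
      (* bounded disturbance with bounded derivative *)
      (exists M, forall t, 0 <= t -> vnorm (d t) <= M) ->
      (forall t, 0 < t -> vderivable d t /\ vnorm (vderiv d t) <= xi_d) ->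
      (* disturbance observer *)
      (forall t, 0 < t -> vderivable F1 t /\
         vderiv F1 t = invmx J *m Om t + invmx J *m u t + F2 t
                       - (C1 * beta) *: (F1 t - we t)) ->
      (forall t, 0 < t -> vderivable F2 t /\
         vderiv F2 t = - (C2 * beta ^+ 2) *: (F1 t - we t)) ->
      let e1 := fun t => F1 t - we t in
      let e2 := fun t => F2 t - invmx J *m d t in
      let eps := fun t => (col_mx (beta *: e1 t) (e2 t) : 'cV[R]_6) in
      let V := fun t => qform Q2 (eps t) in
      let dtil := fun t => d t - J *m F2 t in
      [/\ (* Lyapunov inequality along solutions *)
          (forall t, 0 < t -> derivable V t 1 /\ V^`() t <= - Cd * V t + hm),
          (* exponential convergence of eps into the compact set {V <= hm/Cd} *)
          (forall t, 0 <= t -> V t <= expR (- Cd * t) * V 0 + hm / Cd),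
          (* uniform ultimate boundedness of eps *)
          (forall chi, 0 < chi < 1 -> exists T, 0 <= T /\ forall t, T <= t ->
             vnorm (eps t) <= Num.sqrt (hm / (chi * Cd * lQmin))),
          (* boundedness of the disturbance estimation error *)
          (exists M, forall t, 0 <= t -> vnorm (dtil t) <= M) &
          (* its ultimate bound *)
          (forall chi, 0 < chi < 1 -> exists T, 0 <= T /\ forall t, T <= t ->
             vnorm (dtil t) <= lJmax * Num.sqrt (hm / (chi * Cd * lQmin)))].
Proof.
move=> sJ pJ mJ C1p C2p bp.
have Ju := posdef_unit J pJ.
have [lJ0 Jb] := @J_bound2 _ J lJmax sJ pJ mJ.
pose K := C1 ^+ 2 + C2.
pose b := C1 * C2. pose c := 2 * K. pose a := C2 * (C1 ^+ 2 + 2 * C2).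
have K0 : 0 < K by rewrite /K; nra.
have b0 : 0 < b by rewrite /b mulr_gt0.
have c0 : 0 < c by rewrite /c mulr_gt0.
have a0 : 0 < a by rewrite /a mulr_gt0 //; nra.
have abc : b ^+ 2 < a * c.
  have -> : a * c = b ^+ 2 + C2 * (2 * C1 ^+ 4 + 5 * C1 ^+ 2 * C2 + 4 * C2 ^+ 2)
    by rewrite /a /b /c /K; ring.
  rewrite ltrDl mulr_gt0 //; nra.
have [l0 la E] := @lam_facts _ a b c a0 b0 c0 abc.
set lam := (_ / 2) in l0 la E.
have [mine pd] := @blk_eig _ a b c lam b0 l0 la E.
pose mm := beta * C1 * C2.
pose m := mm * (K / (K + 1)).
pose U := a + b + c.
pose Cd := m / U.
pose Ji := invmx J.
pose cA := \sum_i (\sum_j `|Ji i j|) ^+ 2.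
pose hm := (b ^+ 2 + c ^+ 2) * (cA * xi_d ^+ 2) / m + 1.
have mm0 : 0 < mm by rewrite /mm !mulr_gt0.
have m0 : 0 < m by rewrite /m mulr_gt0 // divr_gt0 //; lra.
have U0 : 0 < U by rewrite /U; lra.
have Cd0 : 0 < Cd by rewrite /Cd divr_gt0.
have cA0 : 0 <= cA by apply: sumr_ge0 => i _; apply: sqr_ge0.
have hm1 : 1 <= hm.
  rewrite /hm lerDr; apply: divr_ge0; last exact: ltW.
  by apply: mulr_ge0; [apply: addr_ge0; apply: sqr_ge0 | apply: mulr_ge0 => //; apply: sqr_ge0].
have hm0 : 0 <= hm by lra.
exists (Qblk a b c : 'M[R]_6), Cd, hm, lam.
split; first by split => //; exact: sym_blk.
move=> qv q0 we Om u d F1 F2 _ _ _ cwe cF1 cF2 cd _ _ dwe _ ddd dF1 dF2 e1 e2 eps V dtil.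
have Vdot : forall t, V t = a * dotv (beta *: e1 t) (beta *: e1 t)
    - 2 * b * dotv (beta *: e1 t) (e2 t) + c * dotv (e2 t) (e2 t).
  by move=> t; rewrite /V qformE /eps bil_blk (dotvC (e2 t)); ring.
have epsn : forall t, dotv (eps t) (eps t) =
    dotv (beta *: e1 t) (beta *: e1 t) + dotv (e2 t) (e2 t).
  move=> t; exact: (@dotv_col _ 3 3 (beta *: e1 t) (beta *: e1 t) (e2 t) (e2 t)).
have Vlow : forall t, lam * dotv (eps t) (eps t) <= V t.
  by move=> t; apply: blk_lower.
have Vup : forall t, V t <= U * dotv (eps t) (eps t).
  move=> t; rewrite Vdot epsn.
  have h := dotv_ge0 (beta *: e1 t + e2 t).
  rewrite dotv_sum2 in h.
  set p11 := dotv (beta *: e1 t) (beta *: e1 t) in h *.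
  set p12 := dotv (beta *: e1 t) (e2 t) in h *.
  set p22 := dotv (e2 t) (e2 t) in h *.
  have q11 : 0 <= p11 by apply: dotv_ge0.
  have q22 : 0 <= p22 by apply: dotv_ge0.
  have f1 : 0 <= b * (p11 + 2 * p12 + p22) by apply: mulr_ge0 => //; exact: ltW.
  have f2 : 0 <= c * p11 by apply: mulr_ge0 => //; exact: ltW.
  have f3 : 0 <= a * p22 by apply: mulr_ge0 => //; exact: ltW.
  rewrite /U; lra.
have V0 : forall t, 0 <= V t.
  move=> t; apply: le_trans (Vlow t); apply: mulr_ge0; [exact: ltW | exact: dotv_ge0].
have ceps : vcont0 eps.
  have h1 : vcont0 (fun s => beta *: e1 s) by apply: VC_scale; apply: VC_sub.
  have h2 : vcont0 e2 by apply: VC_sub => //; apply: VC_mul.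
  exact: (@VC_col _ 3 3 _ _ h1 h2).
have cV : {within [set t : R | 0 <= t], continuous V}.
  apply: (@SC_ext _ (fun s => dotv (eps s) ((Qblk a b c : 'M[R]_6) *m eps s)) V).
    by move=> s; rewrite /V qformE bilE.
  by apply: SC_dot => //; apply: VC_mul.
have Dt : forall t, 0 < t -> derivable V t 1 /\ V^`() t <= - Cd * V t + hm.
  move=> t tp.
  have [dwa dwb] := dwe t tp; have [df1a df1b] := dF1 t tp.
  have [df2a df2b] := dF2 t tp; have [dda ddb] := ddd t tp.
  have hwe : VD we t (invmx J *m (Om t + u t + d t)) by split => //; rewrite -dwb mulKmx.
  have hF1 : VD F1 t (vderiv F1 t) by [].
  have hF2 : VD F2 t (vderiv F2 t) by [].
  have hd : VD d t (vderiv d t) by [].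
  set w := invmx J *m vderiv d t.
  set z1 := beta *: e1 t; set z2 := e2 t.
  have id1 : vderiv F1 t - invmx J *m (Om t + u t + d t) = z2 - (C1 * beta) *: e1 t.
    by rewrite df1b /z2 /e2 /e1 !mulmxDr grp_id.
  have hz1 : VD (fun s => beta *: e1 s) t (beta *: z2 - (C1 * beta) *: z1).
    have := @VD_scale _ _ _ _ _ beta (@VD_sub _ _ _ _ _ _ _ hF1 hwe); rewrite id1 scalerBr /z1 !scalerA mulrC.
    done.
  have hz2 : VD e2 t (- (C2 * beta) *: z1 - w).
    have := @VD_sub _ _ _ _ _ _ _ hF2 (@VD_mul _ _ _ (invmx J) _ _ _ hd); rewrite df2b /z1 scalerA.
    have -> : - (C2 * beta) * beta = - (C2 * beta ^+ 2) by ring.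
    by [].
  have heps : VD eps t (col_mx (beta *: z2 - (C1 * beta) *: z1) (- (C2 * beta) *: z1 - w) : 'cV[R]_6).
    exact: (@VD_col _ 3 3 _ _ _ _ _ hz1 hz2).
  have hQ := @VD_mul _ _ _ (Qblk a b c : 'M[R]_6) _ _ _ heps.
  have sd := @SD_dot _ _ _ _ _ _ _ heps hQ.
  have ext : forall s, dotv (eps s) ((Qblk a b c : 'M[R]_6) *m eps s) = V s.
    by move=> s; rewrite /V qformE bilE.
  have [dV ->] := @SD_ext _ _ V _ _ ext sd.
  split => //.
  have SW : forall x y : 'cV[R]_6, bil (Qblk a b c : 'M[R]_6) x y = bil (Qblk a b c : 'M[R]_6) y x.
    by move=> x y; apply: bil_sym; exact: sym_blk.
  rewrite -!bilE (SW _ (eps t)).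
  set z1' := beta *: z2 - (C1 * beta) *: z1.
  set z2' := - (C2 * beta) *: z1 - w.
  have BE : bil (Qblk a b c : 'M[R]_6) (eps t) (col_mx z1' z2') =
     a * dotv z1 z1' - b * dotv z1 z2' - b * dotv z2 z1' + c * dotv z2 z2'.
    exact: bil_blk.
  rewrite BE /z1' /z2'.
  have hVu : V t <= U * (dotv z1 z1 + dotv z2 z2) by have := Vup t; rewrite epsn.
  have hww : dotv w w <= cA * xi_d ^+ 2.
    apply: le_trans (crude (invmx J) (vderiv d t)) _.
    rewrite -/cA; apply: ler_wpM2l => //.
    rewrite -vnorm_sq; have := vnorm_ge0 (vderiv d t); move: ddb.
    set nd := vnorm _ => h1 h2; nra.
  clear BE ext sd hQ heps.
  clearbody w z1 z2.
  rewrite !dotvBr !dotvZr (dotvC z2 z1).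
  set p11 := dotv z1 z1; set p12 := dotv z1 z2; set p22 := dotv z2 z2.
  set q1 := dotv z1 w; set q2 := dotv z2 w; set ww := dotv w w.
  rewrite [X in X <= _](_ : _ = -2 * mm * (K * p11 + p22) + 2 * b * q1 - 2 * c * q2);
    last by rewrite /mm /a /b /c /K; ring.
  have q11 : 0 <= p11 by apply: dotv_ge0.
  have q22 : 0 <= p22 by apply: dotv_ge0.
  have kk : K / (K + 1) <= K.
    by rewrite ler_pdivrMr ?ler_peMr //; lra.
  have k1 : K / (K + 1) <= 1 by rewrite ler_pdivrMr ?mul1r; lra.
  have hT : mm * (K / (K + 1)) * (p11 + p22) <= mm * (K * p11 + p22).
    rewrite -mulrA ler_pM2l // mulrDr.
    apply: lerD; first by apply: ler_wpM2r.
    by rewrite -[X in _ <= X]mul1r; apply: ler_wpM2r.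
  apply: le_trans (_ : _ <= -2 * m * (p11 + p22) + 2 * b * q1 - 2 * c * q2) _.
    rewrite /m; lra.
  have ww0 : 0 <= ww by apply: dotv_ge0.
  have Y1 : 0 <= m ^+ 2 * p11 - 2 * m * b * q1 + b ^+ 2 * ww.
    have := dotv_ge0 (m *: z1 - b *: w).
    by rewrite dotv_diff2 !dotvZZ dotvZl dotvZr -/p11 -/q1 -/ww mulrA mulrA.
  have Y2 : 0 <= m ^+ 2 * p22 + 2 * m * c * q2 + c ^+ 2 * ww.
    have := dotv_ge0 (m *: z2 + c *: w).
    by rewrite dotv_sum2 !dotvZZ dotvZl dotvZr -/p22 -/q2 -/ww mulrA mulrA.
  exact: (@lyap_core _ b c m U (p11 + p22) (V t) _ p11 p22 q1 q2 ww (cA * xi_d ^+ 2) m0 U0 ww0 (le_refl _) erefl Y1 Y2 hVu hww).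
have Cmp := @comparison _ V Cd hm Cd0 hm0 Dt cV.
have epsV : forall t, dotv (eps t) (eps t) <= V t / lam.
  by move=> t; rewrite ler_pdivlMr // mulrC; apply: Vlow.
have hmp : 0 < hm by lra.
have V00 : 0 <= V 0 by apply: V0.
have uub : forall chi, 0 < chi < 1 -> exists T, 0 <= T /\ forall t, T <= t ->
    vnorm (eps t) <= Num.sqrt (hm / (chi * Cd * lam)).
  move=> chi /andP [ch0 ch1].
  pose del := hm / (chi * Cd) - hm / Cd.
  have delE : del = hm * (1 - chi) / (chi * Cd) by rewrite /del; field; rewrite !gt_eqF.
  have del0 : 0 < del.
    rewrite delE; apply: divr_gt0; last by apply: mulr_gt0.
    by apply: mulr_gt0 => //; lra.
  have T0 : 0 <= V 0 / (Cd * del) by apply: divr_ge0 => //; apply: ltW; apply: mulr_gt0.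
  exists (V 0 / (Cd * del) + 1); split; first lra.
  move=> t tT; have t0 : 0 <= t by lra.
  have ex : expR (- Cd * t) * V 0 <= del.
    rewrite mulNr expRN ler_pdivrMl ?expR_gt0 //.
    have g := expR_ge1Dx (Cd * t).
    have h1 : V 0 / del <= Cd * t.
      have : Cd * (V 0 / (Cd * del) + 1) <= Cd * t by rewrite ler_pM2l.
      have -> : Cd * (V 0 / (Cd * del) + 1) = V 0 / del + Cd by field; rewrite !gt_eqF.
      lra.
    have h2 : V 0 <= del * (V 0 / del) by rewrite mulrC divfK // gt_eqF.
    apply: le_trans h2 _; rewrite [X in _ <= X]mulrC ler_pM2l //; lra.
  have hV := Cmp t t0.
  have hD : dotv (eps t) (eps t) <= hm / (chi * Cd * lam).
    apply: le_trans (epsV t) _.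
    have -> : hm / (chi * Cd * lam) = (hm / (chi * Cd)) / lam by field; rewrite !gt_eqF.
    rewrite ler_pM2r ?invr_gt0 //; rewrite /del in ex; lra.
  by rewrite vnormE; apply: ler_wsqrtr.
have dtilE : forall t, dtil t = - (J *m e2 t).
  by move=> t; rewrite /dtil /e2 mulmxBr mulKVmx // opprB.
have dtilB : forall t, vnorm (dtil t) <= lJmax * vnorm (eps t).
  move=> t; rewrite dtilE vnormN; apply: le_trans (Jb _) _; apply: ler_wpM2l => //.
  exact: (@vnorm_col_r _ 3 3 _ _).
split => //.
- exists (lJmax * Num.sqrt ((V 0 + hm / Cd) / lam)) => t t0.
  apply: le_trans (dtilB t) _; apply: ler_wpM2l => //.
  rewrite vnormE; apply: ler_wsqrtr; apply: le_trans (epsV t) _.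
  rewrite ler_pM2r ?invr_gt0 //; apply: le_trans (Cmp t t0) _.
  rewrite lerD2r; apply: ler_piMl => //.
  by rewrite expR_le1 mulNr oppr_le0; apply: mulr_ge0 => //; apply: ltW.
- move=> chi hc; have [T [T0 HT]] := uub chi hc; exists T; split => // t tT.
  apply: le_trans (dtilB t) _; apply: ler_wpM2l => //; exact: HT.
Qed.
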